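(* Let $\gamma\ge1$, $p(\rho)=\rho^\gamma$, and consider the generalized Riemann problem for $\rho_t+(\rho u)_x=0$, $(\rho u)_t+(\rho u^2+p(\rho))_x=0$ with initial data $\varrho_0=\rho_1\mathcal L^1\lfloor\{x<0\}+\rho_0\delta_{\{x=0\}}+\rho_2\mathcal L^1\lfloor\{x>0\}$, $u(x,0)=u_1\mathsf I_{\{x<0\}}+u_0\mathsf I_{\{x=0\}}+u_2\mathsf I_{\{x>0\}}$, $\rho_1,\rho_2>0$, $\rho_0\ge0$. Consider the single delta shock solutions with front $x=x(t)$ given by the explicit formulas in the context, and suppose they satisfy the over-compressing entropy condition. Then: ($\alpha$) for $\rho_0=0$, each such solution is self-similar; ($\beta$) for $\rho_0>0$: (a) the delta shock front $x=x(t)$ is convex if in addition either (i) $[\rho]=0$ and $u_2\le u_0<\frac{u_1+u_2}{2}$, or (ii) $[\rho]\ne0$ and $u_2\le u_0<\min\{u_1,\frac{[\rho u]+\sqrt a}{[\rho]}\}$; (b) the front is concave if in addition either (i) $[\rho]=0$ and $u_1\ge u_0>\frac{u_1+u_2}{2}$, or (ii) $[\rho]\ne0$ and $u_1\ge u_0>\max\{u_2,\frac{[\rho u]+\sqrt a}{[\rho]}\}$.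
   Context: Notation: $[\rho]=\rho_2-\rho_1$, $[u]=u_2-u_1$, $[u^2]=u_2^2-u_1^2$, $[\rho u]=\rho_2u_2-\rho_1u_1$, $[p]=\rho_2^\gamma-\rho_1^\gamma$; $a=\rho_1\rho_2[u]^2-[\rho][p]$, $b=[\rho]u_0-[\rho u]$, $\Delta(t)=at^2+2\rho_0bt+\rho_0^2$. $\mathcal L^1$ Lebesgue measure, $m\lfloor A$ restriction, $\delta_{\{x=y\}}$ Dirac mass, $\mathsf I_A$ indicator. A single delta shock solution is a Radon measure solution (mass and momentum equations satisfied in the weak measure sense, with $d m/d\varrho=u$, $dn/d\varrho=u^2$ for the momentum and momentum-flux measures $m,n$, and pressure $\rho^\gamma$ on the absolutely continuous part) of the form $\varrho(t)=\rho_1\mathcal L^1\lfloor\{x<x(t)\}+\rho_2\mathcal L^1\lfloor\{x>x(t)\}+w_\rho(t)\delta_{\{x=x(t)\}}$, $u(t)=u_1\mathsf I_{\{x<x(t)\}}+u_2\mathsf I_{\{x>x(t)\}}+x'(t)\mathsf I_{\{x=x(t)\}}$, with $x(0)=0$ and $w_\rho\ge0$. The solutions considered are: for $\rho_0=0$, $[\rho]=0$, $[u]\le0$: $x(t)=\frac{(u_1+u_2)t}{2}$, $w_\rho=-\rho_1[u]t$; for $\rho_0=0$, $[\rho]\ne0$, $a\ge0$: $x(t)=\frac{([\rho u]+\sqrt a)t}{[\rho]}$, $w_\rho=\sqrt a\,t$; for $\rho_0>0$, $[\rho]=0$: $x(t)=\frac{\rho_1[u^2]t^2-2\rho_0u_0t}{2(\rho_1[u]t-\rho_0)}$,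 $w_\rho=-\rho_1[u]t+\rho_0$; for $\rho_0>0$, $[\rho]\ne0$: $x(t)=\frac{[\rho u]t-\rho_0+\sqrt{\Delta(t)}}{[\rho]}$, $w_\rho=\sqrt{\Delta(t)}$ (on the time interval where $\Delta\ge0$). Over-compressing entropy condition: $u_1\ge x'(t)\ge u_2$. *)

(* Defs.v *)
From Stdlib Require Import Reals Lra.
From Coquelicot Require Import Coquelicot.
Open Scope R_scope.

Definition pres (gamma r : R) : R := Rpower r gamma.

Definition jrho (r1 r2 : R) : R := r2 - r1.
Definition ju (u1 u2 : R) : R := u2 - u1.
Definition ju2 (u1 u2 : R) : R := u2 ^ 2 - u1 ^ 2.
Definition jrhou (r1 r2 u1 u2 : R) : R := r2 * u2 - r1 * u1.
Definition jp (gamma r1 r2 : R) : R := pres gamma r2 - pres gamma r1.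

Definition acoef (gamma r1 r2 u1 u2 : R) : R :=
  r1 * r2 * (ju u1 u2) ^ 2 - jrho r1 r2 * jp gamma r1 r2.
Definition bcoef (r1 r2 u1 u2 u0 : R) : R :=
  jrho r1 r2 * u0 - jrhou r1 r2 u1 u2.
Definition DeltaD (gamma r1 r2 r0 u1 u2 u0 t : R) : R :=
  acoef gamma r1 r2 u1 u2 * t ^ 2 + 2 * r0 * bcoef r1 r2 u1 u2 u0 * t + r0 ^ 2.

(* rho0 = 0, [rho] = 0, [u] <= 0 *)
Definition front_A (u1 u2 : R) (t : R) : R := (u1 + u2) * t / 2.
Definition weight_A (r1 u1 u2 : R) (t : R) : R := - r1 * ju u1 u2 * t.

(* rho0 = 0, [rho] <> 0, a >= 0 *)
Definition front_B (gamma r1 r2 u1 u2 : R) (t : R) : R :=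
  (jrhou r1 r2 u1 u2 + sqrt (acoef gamma r1 r2 u1 u2)) * t / jrho r1 r2.
Definition weight_B (gamma r1 r2 u1 u2 : R) (t : R) : R :=
  sqrt (acoef gamma r1 r2 u1 u2) * t.

(* rho0 > 0, [rho] = 0 *)
Definition front_C (r1 r0 u1 u2 u0 : R) (t : R) : R :=
  (r1 * ju2 u1 u2 * t ^ 2 - 2 * r0 * u0 * t) / (2 * (r1 * ju u1 u2 * t - r0)).
Definition weight_C (r1 r0 u1 u2 : R) (t : R) : R := - r1 * ju u1 u2 * t + r0.

(* rho0 > 0, [rho] <> 0 (on the time interval where DeltaD >= 0) *)
Definition front_D (gamma r1 r2 r0 u1 u2 u0 : R) (t : R) : R :=
  (jrhou r1 r2 u1 u2 * t - r0 + sqrt (DeltaD gamma r1 r2 r0 u1 u2 u0 t)) / jrho r1 r2.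
Definition weight_D (gamma r1 r2 r0 u1 u2 u0 : R) (t : R) : R :=
  sqrt (DeltaD gamma r1 r2 r0 u1 u2 u0 t).

(* time interval of existence in case D: the maximal interval [0,T) or [0,T]
   starting at 0 on which DeltaD >= 0 *)
Definition dom_D (gamma r1 r2 r0 u1 u2 u0 : R) (t : R) : Prop :=
  0 <= t /\ forall s, 0 <= s <= t -> 0 <= DeltaD gamma r1 r2 r0 u1 u2 u0 s.

Definition vel (u1 u2 : R) (xf : R -> R) (t y : R) : R :=
  if Rlt_dec y (xf t) then u1 else if Rlt_dec (xf t) y then u2 else Derive xf t.

(* Self-similarity of the single delta shock solution
   rho(t) = rho1 L^1|{x<x(t)} + rho2 L^1|{x>x(t)} + w(t) delta_{x=x(t)},
   u as in [vel]: invariance under (x,t) -> (lambda x, lambda t), i.e. the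
   absolutely continuous part is scale invariant (front scales linearly), the
   Dirac weight scales like the length (w(lambda t) = lambda w(t)), and the
   velocity satisfies u(lambda x, lambda t) = u(x, t). *)
Definition self_similar (u1 u2 : R) (xf wf : R -> R) : Prop :=
  forall lam t, 0 < lam -> 0 <= t ->
    xf (lam * t) = lam * xf t /\ wf (lam * t) = lam * wf t /\
    (0 < t -> forall y, vel u1 u2 xf (lam * t) (lam * y) = vel u1 u2 xf t y).

Definition overcompressing (u1 u2 : R) (xf : R -> R) (D : R -> Prop) : Prop :=
  forall t, D t -> u2 <= Derive xf t <= u1.

Definition convex_on (I : R -> Prop) (f : R -> R) : Prop :=
  forall s t th, I s -> I t -> 0 <= th <= 1 ->
    f (th * s + (1 - th) * t) <= th * f s + (1 - th) * f t.
Definition concave_on (I : R -> Prop) (f : R -> R) : Prop :=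
  forall s t th, I s -> I t -> 0 <= th <= 1 ->
    th * f s + (1 - th) * f t <= f (th * s + (1 - th) * t).

(* Main.v *)
Require Import Defs.
From Stdlib Require Import Reals.
From Coquelicot Require Import Coquelicot.
Open Scope R_scope.

From Stdlib Require Import Lra Psatz.

Lemma lin_derive (xf : R -> R) k : (forall t, xf t = k * t) -> forall t, Derive xf t = k.
Proof.
  intros H t. rewrite (Derive_ext xf (fun t => k * t)) by exact H.
  apply is_derive_unique. auto_derive; auto. ring.
Qed.

Lemma lin_ss u1 u2 (xf wf : R -> R) k w :
  (forall t, xf t = k * t) -> (forall t, wf t = w * t) -> self_similar u1 u2 xf wf.
Proof.
  unfold self_similar; intros Hx Hw lam t Hl Ht. split; [rewrite !Hx; ring|]. split; [rewrite !Hw; ring|].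
  intros Htp y. unfold vel. rewrite !lin_derive with (k := k) by exact Hx.
  rewrite !Hx.
  destruct (Rlt_dec (lam*y) (k*(lam*t))); destruct (Rlt_dec y (k*t)); try reflexivity;
  try (exfalso; nra).
  destruct (Rlt_dec (k*(lam*t)) (lam*y)); destruct (Rlt_dec (k*t) y); try reflexivity;
  exfalso; nra.
Qed.

Lemma inv_conv a b th : 0 < a -> 0 < b -> 0 <= th <= 1 ->
  1 / (th*a + (1-th)*b) <= th*(1/a) + (1-th)*(1/b).
Proof.
  intros Ha Hb Hth. assert (hp: 0 < th*a+(1-th)*b) by nra.
  assert (E: th*(1/a)+(1-th)*(1/b) - 1/(th*a+(1-th)*b)
     = th*(1-th)*(a-b)^2 * / (a*b*(th*a+(1-th)*b))).
  { field. repeat split; apply Rgt_not_eq; nra. }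
  assert (0 <= th*(1-th)*(a-b)^2 * / (a*b*(th*a+(1-th)*b))).
  { apply Rmult_le_pos; [apply Rmult_le_pos; [nra| apply pow2_ge_0]| left; apply Rinv_0_lt_compat; apply Rmult_lt_0_compat; [apply Rmult_lt_0_compat|]; assumption]. }
  lra.
Qed.

Lemma fc_eq r1 r0 u1 u2 u0 t : 0 < r1 -> 0 < r0 -> u2 < u1 -> 0 <= t ->
  front_C r1 r0 u1 u2 u0 t =
  (u1+u2)/2 * t + r0*(u0-(u1+u2)/2)/(r1*(u1-u2))
  - (r0*(r0*(u0-(u1+u2)/2)/(r1*(u1-u2)))) * (1/(r1*(u1-u2)*t + r0)).
Proof.
  intros. assert (0 < r1*(u1-u2)) by nra. assert (0 <= r1*(u1-u2)*t) by nra.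
  unfold front_C, ju2, ju. field.
  repeat split; try (apply Rgt_not_eq; nra); try (apply Rlt_not_eq; nra).
Qed.

Lemma sq_le a b : 0 <= b -> a^2 <= b^2 -> a <= b.
Proof. intros Hb H. destruct (Rle_or_lt a b) as [|Hl]; auto.
  assert (0 < (a-b)*(a+b)) by (apply Rmult_lt_0_compat; lra). nra. Qed.

Lemma key_conv q1 q2 X1 X2 Y1 Y2 c th : 0 <= c -> 0 <= th <= 1 -> 0 <= q1 -> 0 <= q2 ->
  q1^2 = X1^2 + c*Y1^2 -> q2^2 = X2^2 + c*Y2^2 ->
  (th*X1+(1-th)*X2)^2 + c*(th*Y1+(1-th)*Y2)^2 <= (th*q1+(1-th)*q2)^2.
Proof.
  intros Hc Hth H1 H2 e1 e2.
  assert (S: (X1*X2 + c*Y1*Y2)^2 <= (q1*q2)^2).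
  { replace ((q1*q2)^2) with (q1^2*q2^2) by ring. rewrite e1, e2.
    assert (0 <= c*(X1*Y2 - X2*Y1)^2) by (apply Rmult_le_pos; [assumption|apply pow2_ge_0]). nra. }
  assert (S2: X1*X2 + c*Y1*Y2 <= q1*q2) by (apply sq_le; [apply Rmult_le_pos|]; assumption).
  assert (0 <= th*(1-th)*(q1*q2 - (X1*X2 + c*Y1*Y2))) by (apply Rmult_le_pos; nra).
  replace ((th*q1+(1-th)*q2)^2) with (th^2*q1^2 + (1-th)^2*q2^2 + 2*(th*(1-th))*(q1*q2)) by ring.
  rewrite e1, e2. nra.
Qed.

Lemma key_conc q1 q2 X1 X2 Y1 Y2 c th : 0 <= c -> 0 <= th <= 1 -> 0 <= q1 -> 0 <= q2 ->
  0 < X1 -> 0 < X2 ->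
  q1^2 = X1^2 - c*Y1^2 -> q2^2 = X2^2 - c*Y2^2 ->
  (th*q1+(1-th)*q2)^2 <= (th*X1+(1-th)*X2)^2 - c*(th*Y1+(1-th)*Y2)^2.
Proof.
  intros Hc Hth H1 H2 HX1 HX2 e1 e2.
  assert (S: (q1*q2)^2 <= (X1*X2 - c*Y1*Y2)^2).
  { replace ((q1*q2)^2) with (q1^2*q2^2) by ring. rewrite e1, e2.
    assert (0 <= c*(X1*Y2 - X2*Y1)^2) by (apply Rmult_le_pos; [assumption|apply pow2_ge_0]). nra. }
  assert (A1: c*Y1^2 <= X1^2) by nra.
  assert (A2: c*Y2^2 <= X2^2) by nra.
  assert (A3: (c*Y1*Y2)^2 <= (X1*X2)^2).
  { replace ((c*Y1*Y2)^2) with ((c*Y1^2)*(c*Y2^2)) by ring.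
    replace ((X1*X2)^2) with (X1^2*X2^2) by ring.
    apply Rmult_le_compat; nra. }
  assert (P: c*Y1*Y2 <= X1*X2) by (apply sq_le; [apply Rmult_le_pos; lra|assumption]).
  assert (S2: q1*q2 <= X1*X2 - c*Y1*Y2) by (apply sq_le; [lra|assumption]).
  assert (0 <= th*(1-th)*((X1*X2 - c*Y1*Y2) - q1*q2)) by (apply Rmult_le_pos; nra).
  replace ((th*q1+(1-th)*q2)^2) with (th^2*q1^2 + (1-th)^2*q2^2 + 2*(th*(1-th))*(q1*q2)) by ring.
  rewrite e1, e2. nra.
Qed.

Definition Dq a b r0 x := a * x ^ 2 + 2 * r0 * b * x + r0 ^ 2.

Lemma sqrtD_conv a b r0 s t th : b^2 <= a -> 0 <= th <= 1 ->
  sqrt (Dq a b r0 (th*s+(1-th)*t)) <= th * sqrt (Dq a b r0 s) + (1-th) * sqrt (Dq a b r0 t).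
Proof.
  intros Hab Hth.
  assert (E: forall x, Dq a b r0 x = (r0 + b*x)^2 + (a-b^2)*x^2) by (intros; unfold Dq; ring).
  assert (N: forall x, 0 <= Dq a b r0 x) by (intros; rewrite E; apply Rplus_le_le_0_compat; [apply pow2_ge_0| apply Rmult_le_pos; [lra|apply pow2_ge_0]]).
  pose proof (sqrt_pos (Dq a b r0 s)). pose proof (sqrt_pos (Dq a b r0 t)).
  rewrite <- (sqrt_pow2 (th * sqrt (Dq a b r0 s) + (1-th) * sqrt (Dq a b r0 t))) by nra.
  apply sqrt_le_1_alt.
  replace (Dq a b r0 (th*s+(1-th)*t)) with
    ((th*(r0+b*s)+(1-th)*(r0+b*t))^2 + (a-b^2)*(th*s+(1-th)*t)^2) by (unfold Dq; ring).
  apply key_conv; try lra; try assumption; rewrite pow2_sqrt by apply N; apply E.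
Qed.

Lemma sqrtD_conc a b r0 s t th : a <= b^2 -> 0 < r0 -> 0 <= b -> 0 <= s -> 0 <= t ->
  0 <= Dq a b r0 s -> 0 <= Dq a b r0 t -> 0 <= th <= 1 ->
  th * sqrt (Dq a b r0 s) + (1-th) * sqrt (Dq a b r0 t) <= sqrt (Dq a b r0 (th*s+(1-th)*t)).
Proof.
  intros Hab Hr Hb Hs Ht Ns Nt Hth.
  assert (E: forall x, Dq a b r0 x = (r0 + b*x)^2 - (b^2-a)*x^2) by (intros; unfold Dq; ring).
  pose proof (sqrt_pos (Dq a b r0 s)). pose proof (sqrt_pos (Dq a b r0 t)).
  rewrite <- (sqrt_pow2 (th * sqrt (Dq a b r0 s) + (1-th) * sqrt (Dq a b r0 t))) by nra.
  apply sqrt_le_1_alt.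
  replace (Dq a b r0 (th*s+(1-th)*t)) with
    ((th*(r0+b*s)+(1-th)*(r0+b*t))^2 - (b^2-a)*(th*s+(1-th)*t)^2) by (unfold Dq; ring).
  apply key_conc; try lra; try assumption; try nra;
  rewrite pow2_sqrt by assumption; apply E.
Qed.

Lemma fD_conv J j r0 qm qs qt s t th :
  0 <= (th*qs + (1-th)*qt - qm) * / j ->
  (J*(th*s+(1-th)*t) - r0 + qm)/j <= th*((J*s - r0 + qs)/j) + (1-th)*((J*t - r0 + qt)/j).
Proof. intros H. unfold Rdiv. nra. Qed.

Lemma fD_conc J j r0 qm qs qt s t th :
  (th*qs + (1-th)*qt - qm) * / j <= 0 ->
  th*((J*s - r0 + qs)/j) + (1-th)*((J*t - r0 + qt)/j) <= (J*(th*s+(1-th)*t) - r0 + qm)/j.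
Proof. intros H. unfold Rdiv. nra. Qed.

Lemma b_pos r1 r2 u1 u2 u0 : 0 < r1 -> 0 < r2 -> u2 <= u0 <= u1 -> u2 < u1 ->
  0 < bcoef r1 r2 u1 u2 u0.
Proof.
  intros. unfold bcoef, jrho, jrhou.
  assert (0 <= r2*(u0-u2)) by (apply Rmult_le_pos; lra).
  assert (0 <= r1*(u1-u0)) by (apply Rmult_le_pos; lra).
  destruct (Req_dec u0 u2).
  - subst. assert (0 < r1*(u1-u2)) by (apply Rmult_lt_0_compat; lra). nra.
  - assert (0 < r2*(u0-u2)) by (apply Rmult_lt_0_compat; lra). nra.
Qed.

Lemma D_shape gamma r1 r2 r0 u1 u2 u0 s t th (conv : bool) :
  jrho r1 r2 <> 0 -> 0 <= acoef gamma r1 r2 u1 u2 -> 0 < r0 ->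
  0 < bcoef r1 r2 u1 u2 u0 ->
  (if conv then u0 < (jrhou r1 r2 u1 u2 + sqrt (acoef gamma r1 r2 u1 u2)) / jrho r1 r2
   else (jrhou r1 r2 u1 u2 + sqrt (acoef gamma r1 r2 u1 u2)) / jrho r1 r2 < u0) ->
  dom_D gamma r1 r2 r0 u1 u2 u0 s -> dom_D gamma r1 r2 r0 u1 u2 u0 t -> 0 <= th <= 1 ->
  let qm := sqrt (DeltaD gamma r1 r2 r0 u1 u2 u0 (th*s+(1-th)*t)) in
  let qs := sqrt (DeltaD gamma r1 r2 r0 u1 u2 u0 s) in
  let qt := sqrt (DeltaD gamma r1 r2 r0 u1 u2 u0 t) in
  if conv then 0 <= (th*qs + (1-th)*qt - qm) * / jrho r1 r2
  else (th*qs + (1-th)*qt - qm) * / jrho r1 r2 <= 0.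
Proof.
  intros Hj Ha Hr0 Hb Hsig [Hs Hds] [Ht Hdt] Hth qm qs qt.
  assert (DE: forall x, DeltaD gamma r1 r2 r0 u1 u2 u0 x =
     Dq (acoef gamma r1 r2 u1 u2) (bcoef r1 r2 u1 u2 u0) r0 x) by reflexivity.
  subst qm qs qt. rewrite !DE.
  assert (Ns : 0 <= Dq (acoef gamma r1 r2 u1 u2) (bcoef r1 r2 u1 u2 u0) r0 s)
    by (rewrite <- DE; apply Hds; lra).
  assert (Nt : 0 <= Dq (acoef gamma r1 r2 u1 u2) (bcoef r1 r2 u1 u2 u0) r0 t)
    by (rewrite <- DE; apply Hdt; lra).
  revert Hsig Ns Nt.
  assert (Eb: bcoef r1 r2 u1 u2 u0 = jrho r1 r2 * u0 - jrhou r1 r2 u1 u2) by reflexivity.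
  rewrite Eb in Hb |- *.
  set (a := acoef gamma r1 r2 u1 u2) in *.
  set (j := jrho r1 r2) in *. set (J := jrhou r1 r2 u1 u2) in *.
  pose proof (sqrt_pos a) as Hsa. pose proof (sqrt_sqrt a Ha) as Esa.
  set (sa := sqrt a) in *.
  assert (Es: (J + sa)/j * j = J + sa) by (field; exact Hj).
  set (sg := (J + sa)/j) in *.
  intros Hsig Ns Nt.
  destruct (Rlt_or_le 0 j) as [Hjp|Hjn].
  - assert (Hi: 0 < / j) by (apply Rinv_0_lt_compat; lra).
    destruct conv.
    + assert (u0*j < sg*j) by nra.
      assert (j*u0 - J < sa) by lra.
      apply Rmult_le_pos; [|lra].
      pose proof (sqrtD_conv a (j*u0-J) r0 s t th). nra.
    + assert (sg*j < u0*j) by nra.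
      assert (sa < j*u0 - J) by lra.
      pose proof (sqrtD_conc a (j*u0-J) r0 s t th). nra.
  - assert (Hjn': j < 0) by (destruct Hjn; [lra| exfalso; apply Hj; auto]).
    assert (Hi: / j < 0) by (apply Rinv_lt_0_compat; lra).
    destruct conv.
    + assert (sg*j < u0*j) by nra.
      assert (sa < j*u0 - J) by lra.
      pose proof (sqrtD_conc a (j*u0-J) r0 s t th). nra.
    + assert (u0*j < sg*j) by nra.
      assert (j*u0 - J < sa) by lra.
      pose proof (sqrtD_conv a (j*u0-J) r0 s t th). nra.
Qed.

Lemma C_conv r1 r0 u1 u2 u0 (conv : bool) : 0 < r1 -> 0 < r0 -> u2 < u1 ->
  (if conv then u0 < (u1+u2)/2 else (u1+u2)/2 < u0) ->
  forall s t th, 0 <= s -> 0 <= t -> 0 <= th <= 1 ->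
  if conv then front_C r1 r0 u1 u2 u0 (th*s+(1-th)*t) <= th*front_C r1 r0 u1 u2 u0 s + (1-th)*front_C r1 r0 u1 u2 u0 t
  else th*front_C r1 r0 u1 u2 u0 s + (1-th)*front_C r1 r0 u1 u2 u0 t <= front_C r1 r0 u1 u2 u0 (th*s+(1-th)*t).
Proof.
  intros Hr1 Hr0 Hu Hc s t th Hs Ht Hth.
  assert (Hm: 0 <= th*s+(1-th)*t) by nra.
  rewrite !fc_eq by assumption.
  assert (Hk: 0 < r1*(u1-u2)) by nra.
  set (k := r1*(u1-u2)) in *. set (m := (u1+u2)/2) in *.
  assert (EP: r0*(r0*(u0-m)/k) = (r0*r0)*(u0-m)*/k) by (unfold Rdiv; ring).
  assert (Hrk: 0 < r0*r0*/k) by (apply Rmult_lt_0_compat; [nra|apply Rinv_0_lt_compat; lra]).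
  set (P := r0*(r0*(u0-m)/k)) in *.
  assert (Eg: k*(th*s+(1-th)*t)+r0 = th*(k*s+r0)+(1-th)*(k*t+r0)) by ring.
  rewrite Eg.
  assert (Ha: 0 < k*s+r0) by nra. assert (Hb: 0 < k*t+r0) by nra.
  pose proof (inv_conv _ _ _ Ha Hb Hth) as HI.
  set (g := 1 / (th * (k * s + r0) + (1 - th) * (k * t + r0))) in *.
  set (g1 := 1/(k*s+r0)) in *. set (g2 := 1/(k*t+r0)) in *.
  destruct conv.
  - assert (P < 0) by (rewrite EP; nra).
    assert (0 <= -P * (th*g1+(1-th)*g2 - g)) by (apply Rmult_le_pos; lra). nra.
  - assert (0 < P) by (rewrite EP; nra).
    assert (0 <= P * (th*g1+(1-th)*g2 - g)) by (apply Rmult_le_pos; lra). nra.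
Qed.

Theorem proposition3 (gamma r1 r2 r0 u1 u2 u0 : R) :
  1 <= gamma -> 0 < r1 -> 0 < r2 -> 0 <= r0 ->
  (* (alpha) rho0 = 0 *)
  ( r0 = 0 ->
    ( (jrho r1 r2 = 0 -> ju u1 u2 <= 0 ->
         overcompressing u1 u2 (front_A u1 u2) (fun t => 0 < t) ->
         self_similar u1 u2 (front_A u1 u2) (weight_A r1 u1 u2))
    /\ (jrho r1 r2 <> 0 -> 0 <= acoef gamma r1 r2 u1 u2 ->
         overcompressing u1 u2 (front_B gamma r1 r2 u1 u2) (fun t => 0 < t) ->
         self_similar u1 u2 (front_B gamma r1 r2 u1 u2) (weight_B gamma r1 r2 u1 u2)) ) )
  /\
  (* (beta) rho0 > 0 *)
  ( 0 < r0 ->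
    (* (a) convexity *)
    ( (jrho r1 r2 = 0 ->
         overcompressing u1 u2 (front_C r1 r0 u1 u2 u0) (fun t => 0 < t) ->
         u2 <= u0 < (u1 + u2) / 2 ->
         convex_on (fun t => 0 <= t) (front_C r1 r0 u1 u2 u0))
    /\ (jrho r1 r2 <> 0 -> 0 <= acoef gamma r1 r2 u1 u2 ->
         overcompressing u1 u2 (front_D gamma r1 r2 r0 u1 u2 u0)
           (fun t => 0 < t /\ forall s, 0 <= s <= t -> 0 < DeltaD gamma r1 r2 r0 u1 u2 u0 s) ->
         u2 <= u0 < Rmin u1 ((jrhou r1 r2 u1 u2 + sqrt (acoef gamma r1 r2 u1 u2)) / jrho r1 r2) ->
         convex_on (dom_D gamma r1 r2 r0 u1 u2 u0) (front_D gamma r1 r2 r0 u1 u2 u0)) )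
    /\
    (* (b) concavity *)
    ( (jrho r1 r2 = 0 ->
         overcompressing u1 u2 (front_C r1 r0 u1 u2 u0) (fun t => 0 < t) ->
         (u1 + u2) / 2 < u0 <= u1 ->
         concave_on (fun t => 0 <= t) (front_C r1 r0 u1 u2 u0))
    /\ (jrho r1 r2 <> 0 -> 0 <= acoef gamma r1 r2 u1 u2 ->
         overcompressing u1 u2 (front_D gamma r1 r2 r0 u1 u2 u0)
           (fun t => 0 < t /\ forall s, 0 <= s <= t -> 0 < DeltaD gamma r1 r2 r0 u1 u2 u0 s) ->
         Rmax u2 ((jrhou r1 r2 u1 u2 + sqrt (acoef gamma r1 r2 u1 u2)) / jrho r1 r2) < u0 <= u1 ->
         concave_on (dom_D gamma r1 r2 r0 u1 u2 u0) (front_D gamma r1 r2 r0 u1 u2 u0)) ) ).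
Proof.
  intros Hg Hr1 Hr2 Hr0. split.
  { intros _. split.
    - intros _ _ _. apply lin_ss with (k := (u1+u2)/2) (w := - r1 * ju u1 u2).
      + intros; unfold front_A; field.
      + intros; unfold weight_A; ring.
    - intros Hj _ _. apply lin_ss with
        (k := (jrhou r1 r2 u1 u2 + sqrt (acoef gamma r1 r2 u1 u2)) / jrho r1 r2)
        (w := sqrt (acoef gamma r1 r2 u1 u2)).
      + intros; unfold front_B; field; exact Hj.
      + intros; unfold weight_B; ring. }
  intros Hr0p. split; split.
  - intros _ _ Hu s t th Hs Ht Hth.
    exact (C_conv r1 r0 u1 u2 u0 true Hr1 Hr0p ltac:(lra) ltac:(simpl; lra) s t th Hs Ht Hth).
  - intros Hj Ha _ [Hu2 Hu0] s t th Hs Ht Hth.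
    pose proof (Rmin_l u1 ((jrhou r1 r2 u1 u2 + sqrt (acoef gamma r1 r2 u1 u2)) / jrho r1 r2)).
    pose proof (Rmin_r u1 ((jrhou r1 r2 u1 u2 + sqrt (acoef gamma r1 r2 u1 u2)) / jrho r1 r2)).
    pose proof (b_pos r1 r2 u1 u2 u0 Hr1 Hr2 ltac:(lra) ltac:(lra)) as Hb.
    pose proof (D_shape gamma r1 r2 r0 u1 u2 u0 s t th true Hj Ha Hr0p Hb ltac:(simpl; lra) Hs Ht Hth) as K.
    simpl in K. unfold front_D. apply fD_conv. exact K.
  - intros _ _ Hu s t th Hs Ht Hth.
    exact (C_conv r1 r0 u1 u2 u0 false Hr1 Hr0p ltac:(lra) ltac:(simpl; lra) s t th Hs Ht Hth).
  - intros Hj Ha _ [Hu2 Hu0] s t th Hs Ht Hth.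
    pose proof (Rmax_l u2 ((jrhou r1 r2 u1 u2 + sqrt (acoef gamma r1 r2 u1 u2)) / jrho r1 r2)).
    pose proof (Rmax_r u2 ((jrhou r1 r2 u1 u2 + sqrt (acoef gamma r1 r2 u1 u2)) / jrho r1 r2)).
    pose proof (b_pos r1 r2 u1 u2 u0 Hr1 Hr2 ltac:(lra) ltac:(lra)) as Hb.
    pose proof (D_shape gamma r1 r2 r0 u1 u2 u0 s t th false Hj Ha Hr0p Hb ltac:(simpl; lra) Hs Ht Hth) as K.
    simpl in K. unfold front_D. apply fD_conc. exact K.
Qed.
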